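(* Let $I$ be an open interval and $f\in C^\infty(I)$ real-valued. Define $$\alpha:=\sup_{t\in I}\limsup_{n\to\infty}\left(\frac{|f^{(n)}(t)|}{n!}\right)^{1/n},\qquad \beta:=\inf_{t\in I}\limsup_{n\to\infty}\left(\frac{|f^{(n)}(t)|}{n!}\right)^{1/n},$$ with values in $[0,\infty]$, and $R:=1/\alpha$, $S:=1/\beta$ (with $1/0=\infty$, $1/\infty=0$). Then for every $t\in I$ with $|t|<R$ the series $\hat f(t)$ converges absolutely, and for every $t\in I$ with $|t|>S$ the series $\hat f(t)$ diverges.
   Context: For a smooth function $f$ on an interval containing the point $t$, $\hat f(t)$ denotes the series $\hat f(t):=\sum_{n=0}^{\infty}\frac{(-1)^n}{n!}\,t^n f^{(n)}(t)$. *)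

(* Defs.v *)
From Stdlib Require Import Reals Lra Arith Factorial.
Open Scope R_scope.

Inductive Rbar : Type := Finite (r : R) | p_infty | m_infty.

Definition Rbar_le (x y : Rbar) : Prop :=
  match x, y with
  | m_infty, _ => True
  | _, p_infty => True
  | Finite a, Finite b => a <= b
  | _, _ => False
  end.

Definition Rbar_lt (x y : Rbar) : Prop := Rbar_le x y /\ x <> y.

Definition is_Rbar_sup (P : Rbar -> Prop) (s : Rbar) : Prop :=
  (forall x, P x -> Rbar_le x s) /\
  (forall u, (forall x, P x -> Rbar_le x u) -> Rbar_le s u).

Definition is_Rbar_inf (P : Rbar -> Prop) (s : Rbar) : Prop :=
  (forall x, P x -> Rbar_le s x) /\
  (forall u, (forall x, P x -> Rbar_le u x) -> Rbar_le u s).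

Definition is_limsup (u : nat -> R) (l : Rbar) : Prop :=
  exists s : nat -> Rbar,
    (forall N, is_Rbar_sup (fun x => exists k, (N <= k)%nat /\ x = Finite (u k)) (s N)) /\
    is_Rbar_inf (fun x => exists N, x = s N) l.

Definition Rbar_inv (x : Rbar) : Rbar :=
  match x with
  | Finite a => if Req_EM_T a 0 then p_infty else Finite (/ a)
  | p_infty => Finite 0
  | m_infty => Finite 0 (* irrelevant: only applied to values in [0, oo] *)
  end.

Definition nroot (n : nat) (x : R) : R :=
  if Req_EM_T x 0 then 0 else Rpower x (/ INR n).

(* Open interval with endpoints a, b; None stands for -oo (resp. +oo). *)
Definition in_open_interval (a b : option R) (t : R) : Prop :=
  (match a with Some a' => a' < t | None => True end) /\
  (match b with Some b' => t < b' | None => True end).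

(* Dn is the sequence of derivatives of f on the open set I:
   Dn 0 = f on I and Dn (n+1) is the derivative of Dn n at each point of I.
   The existence of such a sequence is exactly f being C^oo on I. *)
Definition derivatives_on (I : R -> Prop) (f : R -> R) (Dn : nat -> R -> R) : Prop :=
  (forall x, I x -> Dn O x = f x) /\
  (forall n x, I x -> derivable_pt_lim (Dn n) x (Dn (S n) x)).

(* the n-th term of  \hat f(t) = sum_n (-1)^n / n! t^n f^(n)(t) *)
Definition fhat_term (Dn : nat -> R -> R) (t : R) (n : nat) : R :=
  (-1) ^ n / INR (fact n) * t ^ n * Dn n t.

Definition ch_seq (Dn : nat -> R -> R) (t : R) (n : nat) : R :=
  nroot n (Rabs (Dn n t) / INR (fact n)).

(* Main.v *)
Require Import Defs.
From Stdlib Require Import Reals Lra Lia Arith Factorial Classical ClassicalEpsilon.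
Open Scope R_scope.

Lemma Rbar_le_trans x y z : Rbar_le x y -> Rbar_le y z -> Rbar_le x z.
Proof. destruct x, y, z; simpl; intros; auto; try lra; contradiction. Qed.

Lemma Rbar_le_total x y : Rbar_le x y \/ Rbar_le y x.
Proof. destruct x, y; simpl; auto. lra. Qed.

Lemma Rbar_le_antisym x y : Rbar_le x y -> Rbar_le y x -> x = y.
Proof. destruct x, y; simpl; intros; try contradiction; auto. f_equal; lra. Qed.

Lemma Rbar_lt_le_trans x y z : Rbar_lt x y -> Rbar_le y z -> Rbar_lt x z.
Proof.
  intros [H1 H2] H3. split. eapply Rbar_le_trans; eauto.
  intro e; subst. apply H2. apply Rbar_le_antisym; auto.
Qed.

Lemma sup_exists (P : Rbar -> Prop) : exists s, is_Rbar_sup P s.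
Proof.
  destruct (classic (P p_infty)) as [Hp|Hp].
  - exists p_infty. split. intros x _; destruct x; simpl; auto.
    intros u Hu. apply Hu in Hp. destruct u; simpl in *; auto.
  - set (E := fun r => P (Finite r)).
    destruct (classic (exists r, E r)) as [Hne|Hemp].
    + destruct (classic (bound E)) as [Hb|Hnb].
      * destruct (completeness E Hb Hne) as [m [Hm1 Hm2]]. exists (Finite m). split.
        -- intros x Hx; destruct x as [r| |]; simpl; auto.
        -- intros u Hu; destruct u as [v| |]; simpl; auto.
           apply Hm2; intros r Hr; exact (Hu _ Hr).
           destruct Hne as [r Hr]; exact (Hu _ Hr).
      * exists p_infty. split. intros x _; destruct x; simpl; auto.
        intros u Hu; destruct u as [v| |]; simpl; auto.
        apply Hnb; exists v; intros r Hr; exact (Hu _ Hr).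
        destruct Hne as [r Hr]; exact (Hu _ Hr).
    + exists m_infty. split.
      * intros x Hx; destruct x as [r| |]; simpl; auto. apply Hemp; exists r; exact Hx.
      * intros; simpl; auto.
Qed.

Definition Rbar_opp (x : Rbar) : Rbar :=
  match x with Finite a => Finite (- a) | p_infty => m_infty | m_infty => p_infty end.

Lemma Rbar_opp_invol x : Rbar_opp (Rbar_opp x) = x.
Proof. destruct x; simpl; auto. f_equal; ring. Qed.

Lemma Rbar_opp_le x y : Rbar_le x y -> Rbar_le (Rbar_opp y) (Rbar_opp x).
Proof. destruct x, y; simpl; auto. lra. Qed.

Lemma inf_exists (P : Rbar -> Prop) : exists s, is_Rbar_inf P s.
Proof.
  destruct (sup_exists (fun x => P (Rbar_opp x))) as [s [H1 H2]].
  exists (Rbar_opp s). split.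
  - intros x Hx. rewrite <- (Rbar_opp_invol x). apply Rbar_opp_le. apply H1.
    rewrite Rbar_opp_invol; auto.
  - intros u Hu. rewrite <- (Rbar_opp_invol u). apply Rbar_opp_le. apply H2.
    intros y Hy. rewrite <- (Rbar_opp_invol y). apply Rbar_opp_le. auto.
Qed.

Lemma limsup_exists (u : nat -> R) : exists l, is_limsup u l.
Proof.
  set (s := fun N => proj1_sig (constructive_indefinite_description _
        (sup_exists (fun x => exists k, (N <= k)%nat /\ x = Finite (u k))))).
  destruct (inf_exists (fun x => exists N, x = s N)) as [l Hl].
  exists l, s. split; auto.
  intro N. exact (proj2_sig (constructive_indefinite_description _
        (sup_exists (fun x => exists k, (N <= k)%nat /\ x = Finite (u k))))).
Qed.

Lemma ch_nonneg Dn t n : 0 <= ch_seq Dn t n.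
Proof. unfold ch_seq, nroot; destruct Req_EM_T; [lra| unfold Rpower; left; apply exp_pos]. Qed.

Lemma ch_pow Dn t n : (1 <= n)%nat -> ch_seq Dn t n ^ n = Rabs (Dn n t) / INR (fact n).
Proof.
  intro Hn. unfold ch_seq, nroot.
  assert (Hx : 0 <= Rabs (Dn n t) / INR (fact n)).
  { unfold Rdiv; apply Rmult_le_pos; [apply Rabs_pos| left; apply Rinv_0_lt_compat; apply INR_fact_lt_0]. }
  destruct Req_EM_T as [e|ne].
  - rewrite e; destruct n; [lia|simpl; ring].
  - rewrite <- Rpower_pow by (unfold Rpower; apply exp_pos).
    rewrite Rpower_mult. rewrite Rinv_l by (apply not_0_INR; lia).
    apply Rpower_1. lra.
Qed.

Lemma term_abs Dn t n : (1 <= n)%nat ->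
  Rabs (fhat_term Dn t n) = (Rabs t * ch_seq Dn t n) ^ n.
Proof.
  intro Hn. rewrite Rpow_mult_distr, ch_pow by auto. unfold fhat_term, Rdiv.
  rewrite !Rabs_mult, Rabs_inv, pow_1_abs, <- RPow_abs.
  rewrite (Rabs_right (INR (fact n))) by (left; apply INR_fact_lt_0). ring.
Qed.

Lemma limsup_ge0 Dn t L : is_limsup (ch_seq Dn t) L -> Rbar_le (Finite 0) L.
Proof.
  intros [s [Hs Hinf]]. apply Hinf. intros x [N ->].
  apply Rbar_le_trans with (Finite (ch_seq Dn t N)). simpl; apply ch_nonneg.
  apply (proj1 (Hs N)). exists N; split; auto.
Qed.

Lemma limsup_small u L a q : is_limsup u L -> Rbar_le L (Finite a) -> a < q ->
  exists N, forall k, (N <= k)%nat -> u k <= q.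
Proof.
  intros [s [Hs Hinf]] HL Haq.
  destruct (classic (exists N, Rbar_le (s N) (Finite q))) as [[N HN]|Hno].
  - exists N; intros k Hk.
    assert (H : Rbar_le (Finite (u k)) (Finite q)).
    { apply Rbar_le_trans with (s N); auto. apply (proj1 (Hs N)); exists k; auto. }
    exact H.
  - exfalso. assert (H : Rbar_le (Finite q) L).
    { apply (proj2 Hinf). intros x [N ->].
      destruct (Rbar_le_total (s N) (Finite q)) as [h|h]; auto.
      exfalso; apply Hno; eauto. }
    assert (H2 : Rbar_le (Finite q) (Finite a)) by (eapply Rbar_le_trans; eauto).
    simpl in H2; lra.
Qed.

Lemma limsup_big u L q : is_limsup u L -> Rbar_lt (Finite q) L ->
  forall N, exists k, (N <= k)%nat /\ q < u k.
Proof.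
  intros [s [Hs Hinf]] [Hle Hne] N.
  assert (H1 : Rbar_le L (s N)) by (apply (proj1 Hinf); exists N; auto).
  destruct (classic (exists k, (N <= k)%nat /\ q < u k)) as [h|Hno]; auto.
  exfalso. assert (H2 : Rbar_le (s N) (Finite q)).
  { apply (proj2 (Hs N)). intros x [k [Hk ->]]. simpl.
    apply Rnot_lt_le; intro; apply Hno; eauto. }
  apply Hne. apply Rbar_le_antisym; auto. eapply Rbar_le_trans; eauto.
Qed.

Lemma series_terms (a : nat -> R) l : infinite_sum a l ->
  (forall N, exists k, (N <= k)%nat /\ 1 <= Rabs (a k)) -> False.
Proof.
  intros H Hb. destruct (H (1/2)) as [N0 HN0]; [lra|].
  destruct (Hb (S N0)) as [k [Hk Hak]]. destruct k; [lia|].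
  assert (HA := HN0 (S k) ltac:(lia)). assert (HB := HN0 k ltac:(lia)).
  unfold Rdist in *. rewrite tech5 in HA.
  assert (Rabs (a (S k)) <= Rabs (sum_f_R0 a k + a (S k) - l) + Rabs (sum_f_R0 a k - l)).
  { replace (a (S k)) with ((sum_f_R0 a k + a (S k) - l) + - (sum_f_R0 a k - l)) at 1 by ring.
    eapply Rle_trans; [apply Rabs_triang| rewrite Rabs_Ropp; lra]. }
  lra.
Qed.

Lemma sum_le_elem f N i : (forall j, 0 <= f j) -> (i <= N)%nat -> f i <= sum_f_R0 f N.
Proof.
  intros Hf. induction N; intro Hi.
  - replace i with 0%nat by lia. simpl; lra.
  - simpl. destruct (Nat.eq_dec i (S N)) as [->|ne].
    + pose proof (cond_pos_sum f N Hf). lra.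
    + pose proof (IHN ltac:(lia)). pose proof (Hf (S N)). lra.
Qed.

Lemma conv_geom (a : nat -> R) N r : (forall n, 0 <= a n) -> 0 < r < 1 ->
  (forall k, (N <= k)%nat -> a k <= r ^ k) -> exists l, infinite_sum a l.
Proof.
  intros Ha Hr Hk.
  set (M := 1 + sum_f_R0 (fun j => a j / r ^ j) N).
  assert (Hrp : forall j, 0 < r ^ j) by (intro; apply pow_lt; lra).
  assert (Hpos : forall j, 0 <= a j / r ^ j).
  { intro j; unfold Rdiv; apply Rmult_le_pos; auto. left; apply Rinv_0_lt_compat; auto. }
  assert (HM : forall i, a i <= M * r ^ i).
  { intro i. destruct (le_lt_dec i N) as [h|h].
    - pose proof (sum_le_elem _ N i Hpos h).
      assert (a i = (a i / r ^ i) * r ^ i) by (field; apply Rgt_not_eq, Hrp).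
      rewrite H0. unfold M. apply Rmult_le_compat_r. left; auto. lra.
    - pose proof (Hk i ltac:(lia)). pose proof (cond_pos_sum _ N Hpos).
      unfold M. pose proof (Hrp i). nra. }
  assert (Hg : Un_growing (sum_f_R0 a)).
  { intro n. simpl. pose proof (Ha (S n)). lra. }
  assert (Hb : has_ub (sum_f_R0 a)).
  { exists (M / (1 - r)). intros x [n ->].
    apply Rle_trans with (sum_f_R0 (fun i => r ^ i * M) n).
    - apply sum_Rle. intros. rewrite Rmult_comm. auto.
    - rewrite <- scal_sum, tech3 by lra. unfold Rdiv.
      assert (0 < r ^ S n) by auto.
      assert (0 < / (1 - r)) by (apply Rinv_0_lt_compat; lra).
      assert (0 <= M) by (pose proof (cond_pos_sum _ N Hpos); unfold M; lra).
      assert (M * ((1 - r ^ S n) * / (1 - r)) = M * / (1 - r) - M * r ^ S n * / (1-r)) by ring.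
      rewrite H2. assert (0 <= M * r ^ S n * / (1 - r)).
      { apply Rmult_le_pos; [apply Rmult_le_pos; lra | lra]. } lra. }
  destruct (growing_cv _ Hg Hb) as [l Hl]. exists l. exact Hl.
Qed.

Lemma choose_q a T : 0 <= T -> 0 <= a -> T * a < 1 -> exists q, a < q /\ T * q < 1.
Proof.
  intros HT Ha H. set (d := (1 - T * a) / (2 * (T + 1))).
  assert (Hd : 0 < d) by (unfold d; apply Rdiv_lt_0_compat; lra).
  assert (Hd2 : d * (2 * (T + 1)) = 1 - T * a) by (unfold d; field; lra).
  exists (a + d). split. lra. nra.
Qed.

Theorem theorem6 (a b : option R) (f : R -> R) (Dn : nat -> R -> R)
  (hsmooth : derivatives_on (in_open_interval a b) f Dn)
  (alpha beta : Rbar)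
  (halpha : is_Rbar_sup
     (fun x => exists t, in_open_interval a b t /\ is_limsup (ch_seq Dn t) x) alpha)
  (hbeta : is_Rbar_inf
     (fun x => exists t, in_open_interval a b t /\ is_limsup (ch_seq Dn t) x) beta) :
  (forall t, in_open_interval a b t -> Rbar_lt (Finite (Rabs t)) (Rbar_inv alpha) ->
     exists l, infinite_sum (fun n => Rabs (fhat_term Dn t n)) l) /\
  (forall t, in_open_interval a b t -> Rbar_lt (Rbar_inv beta) (Finite (Rabs t)) ->
     ~ exists l, infinite_sum (fhat_term Dn t) l).
Proof.
  split.
  - intros t Ht Hlt. destruct (limsup_exists (ch_seq Dn t)) as [L HL].
    assert (HLa : Rbar_le L alpha) by (apply (proj1 halpha); eauto).
    pose proof (Rabs_pos t) as Ht0.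
    assert (Hq : exists a0, Rbar_le L (Finite a0) /\ 0 <= a0 /\ Rabs t * a0 < 1).
    { destruct alpha as [a0| |]; unfold Rbar_inv in Hlt.
      - destruct (Req_EM_T a0 0) as [e|ne].
        + exists a0. split; auto. rewrite e; lra.
        + destruct Hlt as [Hle Hne]. simpl in Hle.
          assert (Hlt' : Rabs t < / a0).
          { destruct Hle as [h|h]; auto. exfalso; apply Hne; rewrite h; auto. }
          destruct (Rlt_or_le a0 0) as [hn|hp].
          * pose proof (Rinv_lt_0_compat a0 hn). lra.
          * assert (0 < a0) by lra. exists a0. split; auto. split; [lra|].
            apply Rmult_lt_compat_r with (r := a0) in Hlt'; auto.
            rewrite Rinv_l in Hlt' by lra. lra.
      - destruct Hlt as [Hle Hne]. simpl in Hle. exfalso; apply Hne. f_equal; lra.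
      - destruct Hlt as [Hle Hne]. simpl in Hle. exfalso; apply Hne. f_equal; lra. }
    destruct Hq as [a0 [HLa0 [Ha0 Hta]]].
    destruct (choose_q a0 (Rabs t) Ht0 Ha0 Hta) as [q [Haq Htq]].
    destruct (limsup_small _ _ _ _ HL HLa0 Haq) as [N HN].
    apply conv_geom with (N := (N + 1)%nat) (r := (Rabs t * q + 1) / 2).
    + intro; apply Rabs_pos.
    + split; [|lra]. assert (0 <= Rabs t * q) by (apply Rmult_le_pos; lra). lra.
    + intros k Hk. rewrite term_abs by lia. apply pow_incr. split.
      * apply Rmult_le_pos; auto. apply ch_nonneg.
      * pose proof (HN k ltac:(lia)).
        assert (Rabs t * ch_seq Dn t k <= Rabs t * q) by (apply Rmult_le_compat_l; auto).
        lra.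
  - intros t Ht Hlt [l Hl]. destruct (limsup_exists (ch_seq Dn t)) as [L HL].
    assert (HbL : Rbar_le beta L) by (apply (proj1 hbeta); eauto).
    assert (Hb0 : Rbar_le (Finite 0) beta).
    { apply (proj2 hbeta). intros x [t' [_ H']]. eapply limsup_ge0; eauto. }
    assert (Hc : 0 < Rabs t /\ Rbar_lt (Finite (/ Rabs t)) L).
    { destruct beta as [b0| |]; unfold Rbar_inv in Hlt.
      - destruct (Req_EM_T b0 0) as [e|ne].
        + destruct Hlt as [Hle _]; simpl in Hle; contradiction.
        + simpl in Hb0. destruct Hlt as [Hle Hne]; simpl in Hle.
          assert (Hlt' : / b0 < Rabs t).
          { destruct Hle as [h|h]; auto. exfalso; apply Hne; rewrite h; auto. }
          assert (0 < b0) by lra. pose proof (Rinv_0_lt_compat b0 H).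
          assert (0 < Rabs t) by lra. split; auto.
          apply Rbar_lt_le_trans with (Finite b0); auto.
          assert (/ Rabs t < b0).
          { rewrite <- (Rinv_inv b0). apply Rinv_lt_contravar; auto. nra. }
          split. simpl; lra. intro e; inversion e; lra.
      - destruct Hlt as [Hle Hne]; simpl in Hle.
        assert (0 < Rabs t).
        { destruct Hle as [h|h]; auto. exfalso; apply Hne; rewrite h; auto. }
        split; auto. apply Rbar_lt_le_trans with p_infty; auto.
        split; simpl; auto. discriminate.
      - simpl in Hb0; contradiction. }
    destruct Hc as [Htp Hc].
    apply (series_terms _ l Hl). intro N.
    destruct (limsup_big _ _ _ HL Hc (N + 1)) as [k [Hk Hqk]].
    exists k. split; [lia|]. rewrite term_abs by lia. apply pow_R1_Rle.
    apply Rmult_lt_compat_l with (r := Rabs t) in Hqk; auto.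
    rewrite Rinv_r in Hqk by lra. lra.
Qed.
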